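(* If $\rho$ is an invariant state supported on $\Omega^\perp=\mathrm{span}\{|-\rangle,|+\rangle,\varphi_{0_1},\varphi_{0_N}\}$, then $\rho=P_-=|-\rangle\langle -|$.
   Context: Fix integers $N\ge 2$ and $n_1\ge n_2\ge\dots\ge n_N\ge 1$. Let $\mathcal H$ be a finite-dimensional complex Hilbert space with orthonormal basis $\{|-\rangle,|+\rangle\}\cup\{|a_k\rangle:1\le k\le N,\ 0\le a\le n_k-1\}$. For vectors $x,y$, $|x\rangle\langle y|$ denotes the operator $u\mapsto\langle y,u\rangle x$. Put $E_k=\mathrm{span}\{|a_k\rangle:0\le a\le n_k-1\}$, $P_k$ the orthogonal projection onto $E_k$, $P_\pm=|\pm\rangle\langle\pm|$, $\zeta_k=e^{2\pi i/n_k}$, and $\varphi_{a_k}=n_k^{-1/2}\sum_{b=0}^{n_k-1}\zeta_k^{-ba}|b_k\rangle$ for $0\le a\le n_k-1$. For $1\le k\le N-1$ let $Z_k=n_k^{-1/2}\sum_{b=0}^{n_{k+1}-1}\sum_{a=0}^{n_k-1}\zeta_k^{ba}|b_{k+1}\rangle\langle a_k|$ (an operator on $\mathcal H$), $|Z|_k=Z_k^*Z_k$. Let $\omega$ range over the set $\{\omega_+,\omega_-,\omega_1,\dots,\omega_{N-1}\}$ of (distinct) Bohr frequencies, and let $\Gamma_{\pm,\omega}>0$, $\gamma_{\pm,\omega}\in\mathbb R$ be constants. Kraus operators: $L_{-,\omega_+}=\sqrt{n_1\Gamma_{-,\omega_+}}|\varphi_{0_1}\rangle\langle +|$, $L_{+,\omega_+}=\sqrt{n_1\Gamma_{+,\omega_+}}|+\rangle\langle\varphi_{0_1}|$,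 $L_{-,\omega_k}=\sqrt{\Gamma_{-,\omega_k}}Z_k$, $L_{+,\omega_k}=\sqrt{\Gamma_{+,\omega_k}}Z_k^*$ ($1\le k\le N-1$), $L_{-,\omega_-}=\sqrt{\Gamma_{-,\omega_-}}|-\rangle\langle\varphi_{0_N}|$, $L_{+,\omega_-}=0$. Effective Hamiltonian $H_{\mathrm{eff}}=n_1\gamma_{-,\omega_+}P_+-n_1\gamma_{+,\omega_+}|\varphi_{0_1}\rangle\langle\varphi_{0_1}|+\gamma_{-,\omega_-}|\varphi_{0_N}\rangle\langle\varphi_{0_N}|-\gamma_{+,\omega_-}P_-+\sum_{k=1}^{N-1}(\gamma_{-,\omega_k}|Z|_k-\gamma_{+,\omega_k}P_{k+1})$. The generator is $\mathcal L(\rho)=-i[H_{\mathrm{eff}},\rho]+\sum_{\omega}\sum_{\epsilon=\pm}\big(L_{\epsilon,\omega}\rho L_{\epsilon,\omega}^*-\tfrac12\{L_{\epsilon,\omega}^*L_{\epsilon,\omega},\rho\}\big)$. A state is a positive operator of trace one; it is invariant if $\mathcal L(\rho)=0$; an operator is supported on a subspace $E$ if its range is contained in $E$. *)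

(* Defs.v *)
From HB Require Import structures.
From mathcomp Require Import all_boot all_order all_algebra.
From mathcomp Require Import all_classical all_reals all_analysis.
From mathcomp Require Import complex.
Unset Printing Implicit Defensive.
Import Order.TTheory GRing.Theory Num.Theory.
Local Open Scope ring_scope.

Section QDefs.
Variables (R : realType) (N : nat) (n : nat -> nat).
Local Notation C := R[i].

(* Orthonormal basis index: inl false = |->, inl true = |+>,
   inr (Tagged k a) = |a_k>  (k : 'I_N is 0-based: paper's k = k+1). *)
Definition site_idx := {k : 'I_N & 'I_(n k)}.
Definition idx := (bool + site_idx)%type.
Definition hdim := #|{: idx}|.

Definition toC (x : R) : C := Complex x 0.
Definition vec (f : idx -> C) : 'cV[C]_hdim := \col_j f (enum_val j).
Definition ket (i : idx) : 'cV[C]_hdim := vec (fun j => (j == i)%:R).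
Definition ket_minus := ket (inl false).
Definition ket_plus := ket (inl true).
(* |a_k> with 0-based k and a given as naturals *)
Definition ketS (k a : nat) : 'cV[C]_hdim :=
  vec (fun j => match j with
                | inl _ => 0
                | inr s => ((tag s : nat) == k) && ((tagged s : nat) == a)
                end%:R).
Definition adj p q (A : 'M[C]_(p, q)) : 'M[C]_(q, p) := map_mx Num.conj A^T.
Arguments adj {p q}.
Definition outer (x y : 'cV[C]_hdim) : 'M[C]_hdim := x *m adj y.

Definition zeta (k : nat) : C :=
  Complex (cos (2 * pi / (n k)%:R)) (sin (2 * pi / (n k)%:R)).
Definition invsqrtn (k : nat) : C := (sqrtC ((n k)%:R : C))^-1.

Definition phi (k a : nat) : 'cV[C]_hdim :=
  invsqrtn k *: \sum_(b < n k) (zeta k ^- (b * a)) *: ketS k b.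

(* Z_k (0-based k: maps E_k to E_{k+1}) *)
Definition Zop (k : nat) : 'M[C]_hdim :=
  invsqrtn k *: \sum_(b < n k.+1) \sum_(a < n k)
     (zeta k ^+ (b * a)) *: outer (ketS k.+1 b) (ketS k a).
Definition absZ (k : nat) : 'M[C]_hdim := adj (Zop k) *m Zop k.
Definition Pk (k : nat) : 'M[C]_hdim := \sum_(a < n k) outer (ketS k a) (ketS k a).
Definition Pminus : 'M[C]_hdim := outer ket_minus ket_minus.
Definition Pplus : 'M[C]_hdim := outer ket_plus ket_plus.

End QDefs.
Arguments adj {R p q}.
Arguments outer {R N n}.
Arguments vec {R N n}.

(* Bohr frequencies: omega_+, omega_-, omega_k (wk k, k 0-based: paper omega_{k+1}) *)
Inductive freq := wplus | wminus | wk of nat.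

Section Gen.
Variables (R : realType) (N : nat) (n : nat -> nat).
Variables (Gm Gp gm gp : freq -> R).
Local Notation C := R[i].
Local Notation d := (hdim N n).
Local Notation toC := (toC R).

Definition sq (x : R) : C := toC (Num.sqrt x).
Definition n1 : R := (n 0)%:R.
Definition phi01 := phi R N n 0 0.
Definition phi0N := phi R N n N.-1 0.

Definition L_m_plus : 'M[C]_d := sq (n1 * Gm wplus) *: outer phi01 (ket_plus R N n).
Definition L_p_plus : 'M[C]_d := sq (n1 * Gp wplus) *: outer (ket_plus R N n) phi01.
Definition L_m_k (k : nat) : 'M[C]_d := sq (Gm (wk k)) *: Zop R N n k.
Definition L_p_k (k : nat) : 'M[C]_d := sq (Gp (wk k)) *: adj (Zop R N n k).
Definition L_m_minus : 'M[C]_d := sq (Gm wminus) *: outer (ket_minus R N n) phi0N.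
Definition L_p_minus : 'M[C]_d := 0.

Definition Heff : 'M[C]_d :=
  toC (n1 * gm wplus) *: Pplus R N n
  - toC (n1 * gp wplus) *: outer phi01 phi01
  + toC (gm wminus) *: outer phi0N phi0N
  - toC (gp wminus) *: Pminus R N n
  + \sum_(k < N.-1) (toC (gm (wk k)) *: absZ R N n k - toC (gp (wk k)) *: Pk R N n k.+1).

Definition dissip (L rho : 'M[C]_d) : 'M[C]_d :=
  L *m rho *m adj L - 2^-1 *: (adj L *m L *m rho + rho *m (adj L *m L)).

Definition generator (rho : 'M[C]_d) : 'M[C]_d :=
  - 'i *: (Heff *m rho - rho *m Heff)
  + dissip L_m_plus rho + dissip L_p_plus rho
  + \sum_(k < N.-1) (dissip (L_m_k k) rho + dissip (L_p_k k) rho)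
  + dissip L_m_minus rho + dissip L_p_minus rho.

End Gen.
Arguments generator {R N n}.

Definition positive_op (R : realType) (N : nat) (n : nat -> nat)
  (A : 'M[R[i]]_(hdim N n)) : Prop :=
  forall v : 'cV[R[i]]_(hdim N n), 0 <= (adj v *m A *m v) 0 0.

Definition is_state (R : realType) (N : nat) (n : nat -> nat)
  (A : 'M[R[i]]_(hdim N n)) : Prop :=
  positive_op R N n A /\ \tr A = 1.

(* range of A contained in the span of the rows of S (i.e. column space of A
   = row space of A^T, inside the row space spanned by S) *)
Definition supported_on (R : realType) (N : nat) (n : nat -> nat) m
  (A : 'M[R[i]]_(hdim N n)) (S : 'M[R[i]]_(m, hdim N n)) : Prop :=
  (A^T <= S)%MS.

Definition Omega_perp (R : realType) (N : nat) (n : nat -> nat)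
  : 'M[R[i]]_(1 + 1 + (1 + 1), hdim N n) :=
  col_mx (col_mx (ket_minus R N n)^T (ket_plus R N n)^T)
         (col_mx (phi01 R N n)^T (phi0N R N n)^T).

(* Main.v *)
Require Import Defs.
From HB Require Import structures.
From mathcomp Require Import all_boot all_order all_algebra.
From mathcomp Require Import all_classical all_reals all_analysis.
From mathcomp Require Import complex.
From mathcomp Require Import ring lra.
Import Order.TTheory GRing.Theory Num.Theory.
Local Open Scope ring_scope.

Section Adj.
Variable R : realType.
Local Notation C := R[i].

Lemma adjM p q r (A : 'M[C]_(p, q)) (B : 'M[C]_(q, r)) :
  adj (A *m B) = adj B *m adj A.
Proof. by rewrite /adj trmx_mul map_mxM. Qed.

Lemma adjK p q (A : 'M[C]_(p, q)) : adj (adj A) = A.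
Proof. by apply/matrixP => i j; rewrite !mxE conjCK. Qed.

Lemma adjD p q (A B : 'M[C]_(p, q)) : adj (A + B) = adj A + adj B.
Proof. by apply/matrixP => i j; rewrite !mxE rmorphD. Qed.

Lemma adjN p q (A : 'M[C]_(p, q)) : adj (- A) = - adj A.
Proof. by apply/matrixP => i j; rewrite !mxE rmorphN. Qed.

Lemma adj0 p q : adj (0 : 'M[C]_(p, q)) = 0.
Proof. by apply/matrixP => i j; rewrite !mxE rmorph0. Qed.

Lemma adjZ p q c (A : 'M[C]_(p, q)) : adj (c *: A) = c^* *: adj A.
Proof. by apply/matrixP => i j; rewrite !mxE rmorphM. Qed.

Lemma adj_sum p q (I : Type) (r : seq I) (P : pred I) (F : I -> 'M[C]_(p, q)) :
  adj (\sum_(i <- r | P i) F i) = \sum_(i <- r | P i) adj (F i).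
Proof. exact: (big_morph _ (@adjD p q) (@adj0 p q)). Qed.

Lemma adj_delta p q (i : 'I_p) (j : 'I_q) : adj (delta_mx i j : 'M[C]_(p,q)) = delta_mx j i.
Proof. by apply/matrixP => a b; rewrite !mxE; case: eqP; case: eqP => //= _ _; rewrite ?conjC1 ?conjC0. Qed.

End Adj.

Section Cplx.
Variable R : realType.
Lemma aux {u c : R} : 0 <= c -> (forall t, 0 <= t * u + t^+2 * c) -> u = 0.
Proof.
move=> c0 H.
have := H (- u / (c + 1)).
set t := - u / (c + 1).
have e : t * (c + 1) = - u by rewrite /t mulfVK // gt_eqF // ltr_wpDl.
move=> h.
have h2 : 0 <= (t * u + t ^+ 2 * c) * (c+1)^+2 by apply: mulr_ge0 => //; apply: sqr_ge0.
have : (t * u + t ^+ 2 * c) * (c+1)^+2 = - u^+2.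
  have -> : (t * u + t ^+ 2 * c) * (c+1)^+2 = (t * (c+1)) * u * (c+1) + (t * (c+1))^+2 * c by ring.
  rewrite e; ring.
move=> e2; rewrite e2 in h2.
by apply/eqP; rewrite -sqrf_eq0 eq_le sqr_ge0 andbT -oppr_ge0.
Qed.

Lemma cplx_aux (a b c : R[i]) : 0 <= c ->
  (forall be : R[i], 0 <= be * a + be^* * b + be^* * be * c) -> a = 0 /\ b = 0.
Proof.
move: a b c => [a1 a2] [b1 b2] [c1 c2].
rewrite lecE /= => /andP[/eqP c20 c10] H.
subst c2.
have Hr : forall t, 0 <= t * (a1 + b1) + t^+2 * c1.
  move=> t; move: (H (Complex t 0)); rewrite lecE /= => /andP[_].
  congr (_ <= _); ring.
have Hi : forall t, 0 <= t * (b2 - a2) + t^+2 * c1.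
  move=> t; move: (H (Complex 0 t)); rewrite lecE /= => /andP[_].
  congr (_ <= _); ring.
have E1 := aux c10 Hr.
have E2 := aux c10 Hi.
move: (H (Complex 1 0)); rewrite lecE /= => /andP[/eqP I1 _].
move: (H (Complex 0 1)); rewrite lecE /= => /andP[/eqP I2 _].
have ea1 : a1 = 0 by lra.
have eb1 : b1 = 0 by lra.
have ea2 : a2 = 0 by lra.
have eb2 : b2 = 0 by lra.
by subst.
Qed.
End Cplx.

Section Kets.
Variables (R : realType) (N : nat) (n : nat -> nat).
Local Notation C := R[i].
Local Notation d := (hdim N n).
Local Notation idx := (idx N n).

Definition ip (u v : 'cV[C]_d) : C := (adj u *m v) 0 0.

Lemma adj_ip u v : adj u *m v = (ip u v)%:M.
Proof. exact: mx11_scalar. Qed.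

Lemma ket_delta (i : idx) : ket R N n i = delta_mx (enum_rank i) 0.
Proof.
apply/matrixP => a b; rewrite !mxE (ord1 b) eqxx andbT.
by rewrite -(inj_eq enum_val_inj) enum_rankK.
Qed.

Lemma ip_ket (i j : idx) : ip (ket R N n i) (ket R N n j) = (i == j)%:R.
Proof.
rewrite /ip !ket_delta adj_delta mul_delta_mx_cond (inj_eq enum_rank_inj).
by case: (i == j); rewrite ?mulr1n ?mulr0n !mxE ?eqxx.
Qed.

Definition sidx {k a} (hk : (k < N)%N) (ha : (a < n k)%N) : idx :=
  inr (Tagged (fun k : 'I_N => 'I_(n k)) (Ordinal ha : 'I_(n (Ordinal hk)))).

Lemma sidx_inr (s : site_idx N n) k a (hk : (k < N)%N) (ha : (a < n k)%N) :
  (inr s == sidx hk ha) = (((tag s : nat) == k) && ((tagged s : nat) == a)).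
Proof.
case: s => k' a' /=.
apply/eqP/andP => [E | [/eqP e1 /eqP e2]].
  move/(congr1 (fun i : idx => match i with inr s => ((tag s : nat), (tagged s : nat)) | inl _ => (0%N, 0%N) end)): E.
  by case=> e1 e2; split; apply/eqP.
have ek : k' = Ordinal hk by apply: val_inj.
subst k'.
have ea : a' = Ordinal ha by apply: val_inj.
by subst a'.
Qed.

Lemma ketS_ket k a (hk : (k < N)%N) (ha : (a < n k)%N) :
  ketS R N n k a = ket R N n (sidx hk ha).
Proof.
apply/matrixP => j z; rewrite !mxE.
case: (enum_val j) => [b|s] //=.
by rewrite sidx_inr.
Qed.


Definition qf (rho : 'M[C]_d) (x : 'cV[C]_d) : C := (adj x *m rho *m x) 0 0.

Lemma qf_expand rho x y be : qf rho (x + be *: y) =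
  qf rho x + (be * (adj x *m rho *m y) 0 0 + be^* * (adj y *m rho *m x) 0 0
  + be^* * be * qf rho y).
Proof.
rewrite /qf adjD adjZ !mulmxDl !mulmxDr -!scalemxAl -!scalemxAr !mxE.
ring.
Qed.

Lemma mul_delta_col p q (A : 'M[C]_(p, q)) k j : (A *m delta_mx j (0 : 'I_1)) k 0 = A k j.
Proof.
rewrite mxE (bigD1 j) //= mxE !eqxx mulr1 big1 ?addr0 // => i /negbTE ne.
by rewrite mxE ne mulr0.
Qed.

Lemma ker_psd rho x : positive_op R N n rho -> qf rho x = 0 ->
  rho *m x = 0 /\ adj x *m rho = 0.
Proof.
move=> Hp Hx.
have H j : (adj x *m rho) 0 j = 0 /\ (rho *m x) j 0 = 0.
  pose y : 'cV[C]_d := delta_mx j 0.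
  have := @cplx_aux R ((adj x *m rho *m y) 0 0) ((adj y *m rho *m x) 0 0) (qf rho y) (Hp y).
  case.
    by move=> be; move: (Hp (x + be *: y)); rewrite -/(qf rho _) qf_expand Hx add0r.
  rewrite /y mul_delta_col => -> E; split => //.
  rewrite -[RHS]E /y adj_delta -mulmxA; symmetry.
  rewrite [LHS]mxE (bigD1 j) //= mxE !eqxx mul1r big1 ?addr0 // => i /negbTE ne.
  by rewrite mxE ne mul0r.
split; apply/matrixP => i j; rewrite [RHS]mxE.
  by rewrite (ord1 j); case: (H i).
by rewrite (ord1 i); case: (H j).
Qed.

End Kets.

Arguments qf {R N n}.
Arguments ip {R N n}.

Lemma sum5_eq0 (C : numDomainType) (m : nat) (a1 a2 a5 a6 : C) (f g : 'I_m -> C) :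
  0 <= a1 -> 0 <= a2 -> (forall k, 0 <= f k) -> (forall k, 0 <= g k) -> 0 <= a5 -> 0 <= a6 ->
  a1 + a2 + \sum_(k < m) (f k + g k) + a5 + a6 = 0 ->
  [/\ a1 = 0, (forall k, f k = 0) & a5 = 0].
Proof.
move=> h1 h2 hf hg h5 h6 /eqP.
have Ps : 0 <= \sum_(k < m) (f k + g k) by apply: sumr_ge0 => k _; apply: addr_ge0.
rewrite !paddr_eq0 ?addr_ge0 //.
move=> /andP[/andP[/andP[/andP[/eqP e1 _] hs] /eqP e5] _].
split => // k; move: hs; rewrite psumr_eq0; last by move=> i _; apply: addr_ge0.
move=> /allP /(_ k (mem_index_enum _)) /=.
by rewrite paddr_eq0 // => /andP[/eqP -> _].
Qed.

Section Gen.
Variables (R : realType) (N : nat) (n : nat -> nat) (Gm Gp gm gp : freq -> R).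
Local Notation C := R[i].
Local Notation d := (hdim N n).
Variable rho : 'M[C]_d.

Lemma qfD (A B : 'M[C]_d) x : qf (A + B) x = qf A x + qf B x.
Proof. by rewrite /qf mulmxDr mulmxDl mxE. Qed.
Lemma qfZ c (A : 'M[C]_d) x : qf (c *: A) x = c * qf A x.
Proof. by rewrite /qf -scalemxAr -scalemxAl mxE. Qed.
Lemma qfN (A : 'M[C]_d) x : qf (- A) x = - qf A x.
Proof. by rewrite -scaleN1r qfZ mulN1r. Qed.
Lemma qfB (A B : 'M[C]_d) x : qf (A - B) x = qf A x - qf B x.
Proof. by rewrite qfD qfN. Qed.
Lemma qf0 x : qf (0 : 'M[C]_d) x = 0.
Proof. by rewrite /qf mulmx0 mul0mx mxE. Qed.
Lemma qf_sum (I : Type) (r : seq I) (P : pred I) (F : I -> 'M[C]_d) x :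
  qf (\sum_(i <- r | P i) F i) x = \sum_(i <- r | P i) qf (F i) x.
Proof. exact: (big_morph (fun A => qf A x) (fun A B => qfD A B x) (qf0 x)). Qed.

Lemma qf_LrhoL (L : 'M[C]_d) x : qf (L *m rho *m adj L) x = qf rho (adj L *m x).
Proof. by rewrite /qf adjM adjK !mulmxA. Qed.

Definition condL (L : 'M[C]_d) x :=
  qf (adj L *m L *m rho) x = 0 /\ qf (rho *m (adj L *m L)) x = 0.

Lemma qf_dissip L x : condL L x -> qf (dissip R N n L rho) x = qf rho (adj L *m x).
Proof.
by case=> h1 h2; rewrite /dissip qfB qfZ qfD h1 h2 addr0 mulr0 subr0 qf_LrhoL.
Qed.

Lemma condL_K L x : rho *m x = 0 -> adj x *m rho = 0 -> condL L x.
Proof.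
move=> h1 h2; split; rewrite /qf.
  by rewrite -!mulmxA h1 !mulmx0 mxE.
by rewrite !mulmxA h2 !mul0mx mxE.
Qed.

Lemma condL_0 L x : L *m x = 0 -> condL L x.
Proof.
move=> h; split; rewrite /qf.
  by rewrite !mulmxA -adjM h adj0 !mul0mx mxE.
by rewrite !mulmxA -[_ *m L *m x]mulmxA h mulmx0 mxE.
Qed.

Lemma gen_qf_abs (H A1 A2 A5 A6 : 'M[C]_d) (F G : nat -> 'M[C]_d) x :
  qf (H *m rho) x = qf (rho *m H) x ->
  condL A1 x -> condL A2 x -> (forall k, (k < N.-1)%N -> condL (F k) x /\ condL (G k) x) ->
  condL A5 x -> condL A6 x ->
  qf (- 'i *: (H *m rho - rho *m H) + dissip R N n A1 rho + dissip R N n A2 rho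
     + \sum_(k < N.-1) (dissip R N n (F k) rho + dissip R N n (G k) rho)
     + dissip R N n A5 rho + dissip R N n A6 rho) x =
  qf rho (adj A1 *m x) + qf rho (adj A2 *m x)
  + \sum_(k < N.-1) (qf rho (adj (F k) *m x) + qf rho (adj (G k) *m x))
  + qf rho (adj A5 *m x) + qf rho (adj A6 *m x).
Proof.
move=> eH c1 c2 c3 c5 c6.
Timeout 20 rewrite 5!qfD.
Timeout 20 rewrite qfZ.
Timeout 20 rewrite qfB eH subrr mulr0 add0r.
Timeout 20 rewrite qf_sum.
congr (_ + _ + _ + _ + _); try exact: qf_dissip.
apply: eq_bigr => k _.
case: (c3 k (ltn_ord k)) => c3a c3b; rewrite qfD.
by congr (_ + _); exact: qf_dissip.
Qed.

Lemma gen_qf x :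
  qf (Heff R N n gm gp *m rho) x = qf (rho *m Heff R N n gm gp) x ->
  condL (L_m_plus R N n Gm) x -> condL (L_p_plus R N n Gp) x ->
  (forall k, (k < N.-1)%N -> condL (L_m_k R N n Gm k) x /\ condL (L_p_k R N n Gp k) x) ->
  condL (L_m_minus R N n Gm) x -> condL (L_p_minus R N n) x ->
  qf (generator Gm Gp gm gp rho) x =
  qf rho (adj (L_m_plus R N n Gm) *m x) + qf rho (adj (L_p_plus R N n Gp) *m x)
  + \sum_(k < N.-1) (qf rho (adj (L_m_k R N n Gm k) *m x) + qf rho (adj (L_p_k R N n Gp k) *m x))
  + qf rho (adj (L_m_minus R N n Gm) *m x) + qf rho (adj (L_p_minus R N n) *m x).
Proof.
move=> eH c1 c2 c3 c5 c6.
exact: (gen_qf_abs _ _ _ _ _ (L_m_k R N n Gm) (L_p_k R N n Gp) x eH c1 c2 c3 c5 c6).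
Qed.

Lemma gen_zero x : positive_op R N n rho -> generator Gm Gp gm gp rho = 0 ->
  qf (Heff R N n gm gp *m rho) x = qf (rho *m Heff R N n gm gp) x ->
  condL (L_m_plus R N n Gm) x -> condL (L_p_plus R N n Gp) x ->
  (forall k, (k < N.-1)%N -> condL (L_m_k R N n Gm k) x /\ condL (L_p_k R N n Gp k) x) ->
  condL (L_m_minus R N n Gm) x -> condL (L_p_minus R N n) x ->
  [/\ qf rho (adj (L_m_plus R N n Gm) *m x) = 0,
      (forall k : 'I_N.-1, qf rho (adj (L_m_k R N n Gm k) *m x) = 0) &
      qf rho (adj (L_m_minus R N n Gm) *m x) = 0].
Proof.
move=> Hp Hg eH c1 c2 c3 c5 c6.
have := gen_qf x eH c1 c2 c3 c5 c6.
rewrite Hg qf0 => /esym.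
have P v : 0 <= qf rho v by exact: Hp.
exact: (@sum5_eq0 _ _ _ _ _ _ (fun k : 'I_N.-1 => qf rho (adj (L_m_k R N n Gm k) *m x))
  (fun k : 'I_N.-1 => qf rho (adj (L_p_k R N n Gp k) *m x)) (P _) (P _) (fun k => P _) (fun k => P _) (P _) (P _)).
Qed.

End Gen.

Arguments ketS_ket {R N n k a}.
Arguments sidx_inr {N n} s {k a}.
Arguments ip_ket {R N n}.

Section Ip.
Variables (R : realType) (N : nat) (n : nat -> nat).
Local Notation C := R[i].
Local Notation d := (hdim N n).
Local Notation cv := ('cV[C]_d).

Lemma outer_mul (u v w : cv) : outer u v *m w = ip v w *: u.
Proof. by rewrite /outer -mulmxA adj_ip mul_mx_scalar. Qed.
Lemma mul_outer (u v w : cv) : adj w *m outer u v = ip w u *: adj v.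
Proof. by rewrite /outer mulmxA adj_ip mul_scalar_mx. Qed.
Lemma adj_outer (u v : cv) : adj (outer u v) = outer v u.
Proof. by rewrite /outer adjM adjK. Qed.

Lemma ipZr (u v : cv) c : ip u (c *: v) = c * ip u v.
Proof. by rewrite /ip -scalemxAr mxE. Qed.
Lemma ipZl (u v : cv) c : ip (c *: u) v = c^* * ip u v.
Proof. by rewrite /ip adjZ -scalemxAl mxE. Qed.
Lemma ipDr (u v w : cv) : ip u (v + w) = ip u v + ip u w.
Proof. by rewrite /ip mulmxDr mxE. Qed.
Lemma ipDl (u v w : cv) : ip (u + v) w = ip u w + ip v w.
Proof. by rewrite /ip adjD mulmxDl mxE. Qed.
Lemma ip_sumr (I : Type) (r : seq I) (P : pred I) (F : I -> cv) w :
  ip w (\sum_(i <- r | P i) F i) = \sum_(i <- r | P i) ip w (F i).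
Proof. by rewrite /ip mulmx_sumr summxE. Qed.
Lemma ip_suml (I : Type) (r : seq I) (P : pred I) (F : I -> cv) w :
  ip (\sum_(i <- r | P i) F i) w = \sum_(i <- r | P i) ip (F i) w.
Proof. by rewrite /ip adj_sum mulmx_suml summxE. Qed.

Lemma ip_ketS k a k' b : (k < N)%N -> (a < n k)%N -> (k' < N)%N -> (b < n k')%N ->
  ip (ketS R N n k a) (ketS R N n k' b) = ((k == k') && (a == b))%:R.
Proof.
move=> hk ha hk' hb.
rewrite (ketS_ket hk ha) (ketS_ket hk' hb) ip_ket.
by rewrite /sidx sidx_inr /= eq_sym [a == b]eq_sym.
Qed.

Lemma ip_ketS_l k a i : (k < N)%N -> (a < n k)%N ->
  ip (ketS R N n k a) (ket R N n (inl i)) = 0.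
Proof. by move=> hk ha; rewrite (ketS_ket hk ha) ip_ket. Qed.
Lemma ip_ketS_r k a i : (k < N)%N -> (a < n k)%N ->
  ip (ket R N n (inl i)) (ketS R N n k a) = 0.
Proof. by move=> hk ha; rewrite (ketS_ket hk ha) ip_ket. Qed.

Lemma phi_0 k : phi R N n k 0 = invsqrtn R n k *: \sum_(b < n k) ketS R N n k b.
Proof.
rewrite /phi; congr (_ *: _); apply: eq_bigr => b _.
by rewrite muln0 expr0 invr1 scale1r.
Qed.

End Ip.

Arguments ip_ketS {R N n k a k' b}.
Arguments ip_ketS_l {R N n k a} i.
Arguments ip_ketS_r {R N n k a} i.

Section Abs.
Variable R : realType.
Local Notation C := R[i].

Lemma Heff_act_abs (d : nat) (P1 P2 P3 P4 : 'M[C]_d) (Zs Ps : nat -> 'M[C]_d)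
  (c1 c2 c3 c4 : C) (c5 c6 : nat -> C) (x : 'cV[C]_d) (K : nat) :
  P1 *m x = 0 -> P2 *m x = 0 -> P3 *m x = 0 -> P4 *m x = x ->
  (forall k, (k < K)%N -> Zs k *m x = 0) -> (forall k, (k < K)%N -> Ps k.+1 *m x = 0) ->
  (c1 *: P1 - c2 *: P2 + c3 *: P3 - c4 *: P4
   + \sum_(k < K) (c5 k *: Zs k - c6 k *: Ps k.+1)) *m x = - c4 *: x.
Proof.
move=> h1 h2 h3 h4 h5 h6.
rewrite !mulmxDl !mulNmx -!scalemxAl h1 h2 h3 h4 !scaler0 mulmx_suml big1.
  by rewrite !(subr0, addr0, add0r, sub0r) scaleNr.
move=> k _; rewrite mulmxDl mulNmx -!scalemxAl h5 // h6 //.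
by rewrite !scaler0 subr0.
Qed.

Lemma Heff_lact_abs (d : nat) (P1 P2 P3 P4 : 'M[C]_d) (Zs Ps : nat -> 'M[C]_d)
  (c1 c2 c3 c4 : C) (c5 c6 : nat -> C) (y : 'rV[C]_d) (K : nat) :
  y *m P1 = 0 -> y *m P2 = 0 -> y *m P3 = 0 -> y *m P4 = y ->
  (forall k, (k < K)%N -> y *m Zs k = 0) -> (forall k, (k < K)%N -> y *m Ps k.+1 = 0) ->
  y *m (c1 *: P1 - c2 *: P2 + c3 *: P3 - c4 *: P4
   + \sum_(k < K) (c5 k *: Zs k - c6 k *: Ps k.+1)) = - c4 *: y.
Proof.
move=> h1 h2 h3 h4 h5 h6.
rewrite !mulmxDr !mulmxN -!scalemxAr h1 h2 h3 h4 !scaler0 mulmx_sumr big1.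
  by rewrite !(subr0, addr0, add0r, sub0r) scaleNr.
move=> k _; rewrite mulmxDr mulmxN -!scalemxAr h5 // h6 //.
by rewrite !scaler0 subr0.
Qed.


End Abs.

Section Conc.
Variables (R : realType) (N : nat) (n : nat -> nat).
Hypothesis HN : (2 <= N)%N.
Hypothesis Hpos : forall k : nat, (k < N)%N -> (1 <= n k)%N.
Local Notation C := R[i].
Local Notation d := (hdim N n).
Local Notation cv := ('cV[C]_d).
Local Notation ketS := (ketS R N n).
Local Notation m := (ket R N n (inl false)).
Local Notation p := (ket R N n (inl true)).
Local Notation u k := (\sum_(b < n k) ketS k b).

Lemma ip_u_l k (w : cv) : (forall b, (b < n k)%N -> ip (ketS k b) w = 0) -> ip (u k) w = 0.
Proof. by move=> h; rewrite ip_suml big1 // => b _; apply: h. Qed.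
Lemma ip_u_r k (w : cv) : (forall b, (b < n k)%N -> ip w (ketS k b) = 0) -> ip w (u k) = 0.
Proof. by move=> h; rewrite ip_sumr big1 // => b _; apply: h. Qed.
Lemma ip_phi_l k (w : cv) : (forall b, (b < n k)%N -> ip (ketS k b) w = 0) -> ip (phi R N n k 0) w = 0.
Proof. by move=> h; rewrite phi_0 ipZl ip_u_l ?mulr0. Qed.
Lemma ip_phi_r k (w : cv) : (forall b, (b < n k)%N -> ip w (ketS k b) = 0) -> ip w (phi R N n k 0) = 0.
Proof. by move=> h; rewrite phi_0 ipZr ip_u_r ?mulr0. Qed.

Lemma ip_u_u k : (k < N)%N -> ip (u k) (u k) = (n k)%:R.
Proof.
move=> hk; rewrite ip_suml (eq_bigr (fun _ => 1)).
  by rewrite sumr_const card_ord.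
move=> b _; rewrite ip_sumr (bigD1 b) //= ip_ketS // !eqxx /= big1 ?addr0 // => c ne.
have ne' : (b : nat) != c by rewrite eq_sym.
by rewrite ip_ketS // eqxx /= (negbTE ne').
Qed.

Lemma nk_neq0 k : (k < N)%N -> ((n k)%:R : C) != 0.
Proof. by move=> hk; rewrite pnatr_eq0 -lt0n; apply: Hpos. Qed.

Lemma s_neq0 k : (k < N)%N -> invsqrtn R n k != 0.
Proof. by move=> hk; rewrite /invsqrtn invr_eq0 sqrtC_eq0 nk_neq0. Qed.

Lemma ip_phi_phi k : (k < N)%N -> ip (phi R N n k 0) (phi R N n k 0) != 0.
Proof.
move=> hk; rewrite phi_0 ipZl ipZr ip_u_u //.
by rewrite mulf_neq0 ?conjC_eq0 ?s_neq0 // mulf_neq0 ?s_neq0 ?nk_neq0.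
Qed.


Lemma N0 : (0 < N)%N. Proof. by apply: leq_trans HN. Qed.
Lemma N1 : (1 < N)%N. Proof. by []. Qed.
Lemma Npred : (N.-1 < N)%N. Proof. by rewrite prednK ?N0. Qed.

Lemma Zop_mul0 k (w : cv) : (forall a, (a < n k)%N -> ip (ketS k a) w = 0) ->
  Zop R N n k *m w = 0.
Proof.
move=> h; rewrite /Zop -scalemxAl mulmx_suml big1 ?scaler0 // => b _.
rewrite mulmx_suml big1 // => a _.
by rewrite -scalemxAl outer_mul (h _ (ltn_ord a)) scale0r scaler0.
Qed.

Lemma mul_Zop0 k (w : cv) : (forall b, (b < n k.+1)%N -> ip w (ketS k.+1 b) = 0) ->
  adj w *m Zop R N n k = 0.
Proof.
move=> h; rewrite /Zop -scalemxAr mulmx_sumr big1 ?scaler0 // => b _.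
rewrite mulmx_sumr big1 // => a _.
by rewrite -scalemxAr mul_outer (h _ (ltn_ord b)) scale0r scaler0.
Qed.

Lemma adjZop_mul0 k (w : cv) : (forall b, (b < n k.+1)%N -> ip w (ketS k.+1 b) = 0) ->
  adj (Zop R N n k) *m w = 0.
Proof.
move=> h; have -> : adj (Zop R N n k) *m w = adj (adj w *m Zop R N n k) by rewrite adjM adjK.
by rewrite mul_Zop0 // adj0.
Qed.

Lemma mul_adjZop0 k (w : cv) : (forall a, (a < n k)%N -> ip (ketS k a) w = 0) ->
  adj w *m adj (Zop R N n k) = 0.
Proof. by move=> h; rewrite -adjM Zop_mul0 // adj0. Qed.

Lemma absZ_mul0 k (w : cv) : Zop R N n k *m w = 0 -> absZ R N n k *m w = 0.
Proof. by move=> h; rewrite /absZ -mulmxA h mulmx0. Qed.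
Lemma mul_absZ0 k (w : cv) : Zop R N n k *m w = 0 -> adj w *m absZ R N n k = 0.
Proof. by move=> h; rewrite /absZ mulmxA -adjM h adj0 mul0mx. Qed.

Lemma Pk_mul0 j (w : cv) : (forall a, (a < n j)%N -> ip (ketS j a) w = 0) -> Pk R N n j *m w = 0.
Proof.
move=> h; rewrite /Pk mulmx_suml big1 // => a _.
by rewrite outer_mul (h _ (ltn_ord a)) scale0r.
Qed.
Lemma mul_Pk0 j (w : cv) : (forall a, (a < n j)%N -> ip w (ketS j a) = 0) -> adj w *m Pk R N n j = 0.
Proof.
move=> h; rewrite /Pk mulmx_sumr big1 // => a _.
by rewrite mul_outer (h _ (ltn_ord a)) scale0r.
Qed.

Lemma ip_mm : ip m m = 1. Proof. by rewrite ip_ket eqxx. Qed.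
Lemma ip_pp : ip p p = 1. Proof. by rewrite ip_ket eqxx. Qed.
Lemma ip_mp : ip m p = 0. Proof. by rewrite ip_ket. Qed.
Lemma ip_pm : ip p m = 0. Proof. by rewrite ip_ket. Qed.

Lemma eH_eig (H rho : 'M[C]_d) (x : 'cV[C]_d) c :
  adj x *m H = c *: adj x -> H *m x = c *: x ->
  qf (H *m rho) x = qf (rho *m H) x.
Proof.
move=> h1 h2; rewrite /qf mulmxA h1 -!mulmxA h2.
by rewrite -scalemxAl -!scalemxAr !mxE.
Qed.


Lemma kS {k} : (k < N.-1)%N -> (k.+1 < N)%N.
Proof. by rewrite -ltn_predRL. Qed.
Lemma kN {k} : (k < N.-1)%N -> (k < N)%N.
Proof. by move=> hk; apply: ltn_trans hk Npred. Qed.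

Lemma Heff_m gm gp : Heff R N n gm gp *m m = - toC R (gp wminus) *: m.
Proof.
rewrite /Heff; apply: (@Heff_act_abs R _ _ _ _ _ (absZ R N n) (Pk R N n) _ _ _ _ (fun k => toC R (gm (wk k))) (fun k => toC R (gp (wk k))) _ N.-1).
- by rewrite /Pplus /ket_plus outer_mul ip_pm scale0r.
- rewrite outer_mul /phi01 ip_phi_l ?scale0r // => b hb; exact: ip_ketS_l _ N0 hb.
- rewrite outer_mul /phi0N ip_phi_l ?scale0r // => b hb; exact: ip_ketS_l _ Npred hb.
- by rewrite /Pminus /ket_minus outer_mul ip_mm scale1r.
- move=> k hk; apply: absZ_mul0; apply: Zop_mul0 => a ha; exact: ip_ketS_l _ (kN hk) ha.
- move=> k hk; apply: Pk_mul0 => a ha; exact: ip_ketS_l _ (kS hk) ha.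
Qed.

Lemma m_Heff gm gp : adj m *m Heff R N n gm gp = - toC R (gp wminus) *: adj m.
Proof.
rewrite /Heff; apply: (@Heff_lact_abs R _ _ _ _ _ (absZ R N n) (Pk R N n) _ _ _ _ (fun k => toC R (gm (wk k))) (fun k => toC R (gp (wk k))) _ N.-1).
- by rewrite /Pplus /ket_plus mul_outer ip_mp scale0r.
- rewrite mul_outer /phi01 ip_phi_r ?scale0r // => b hb; exact: ip_ketS_r _ N0 hb.
- rewrite mul_outer /phi0N ip_phi_r ?scale0r // => b hb; exact: ip_ketS_r _ Npred hb.
- by rewrite /Pminus /ket_minus mul_outer ip_mm scale1r.
- move=> k hk; apply: mul_absZ0; apply: Zop_mul0 => a ha; exact: ip_ketS_l _ (kN hk) ha.
- move=> k hk; apply: mul_Pk0 => a ha; exact: ip_ketS_r _ (kS hk) ha.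
Qed.

Lemma eH_m gm gp rho : qf (Heff R N n gm gp *m rho) m = qf (rho *m Heff R N n gm gp) m.
Proof. exact: (eH_eig _ _ _ _ (m_Heff gm gp) (Heff_m gm gp)). Qed.

Lemma Lmp_m Gm : L_m_plus R N n Gm *m m = 0.
Proof. by rewrite /L_m_plus -scalemxAl outer_mul /ket_plus ip_pm scale0r scaler0. Qed.
Lemma Lpp_m Gp : L_p_plus R N n Gp *m m = 0.
Proof.
rewrite /L_p_plus -scalemxAl outer_mul /phi01 ip_phi_l ?scale0r ?scaler0 // => b hb.
exact: ip_ketS_l _ N0 hb.
Qed.
Lemma Lmk_m Gm k : (k < N.-1)%N -> L_m_k R N n Gm k *m m = 0.
Proof.
move=> hk; rewrite /L_m_k -scalemxAl Zop_mul0 ?scaler0 // => a ha.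
exact: ip_ketS_l _ (kN hk) ha.
Qed.
Lemma Lpk_m Gp k : (k < N.-1)%N -> L_p_k R N n Gp k *m m = 0.
Proof.
move=> hk; rewrite /L_p_k -scalemxAl adjZop_mul0 ?scaler0 // => a ha.
exact: ip_ketS_r _ (kS hk) ha.
Qed.
Lemma Lmm_m Gm : L_m_minus R N n Gm *m m = 0.
Proof.
rewrite /L_m_minus -scalemxAl outer_mul /phi0N ip_phi_l ?scale0r ?scaler0 // => b hb.
exact: ip_ketS_l _ Npred hb.
Qed.
Lemma Lpm_m : L_p_minus R N n *m m = 0.
Proof. by rewrite /L_p_minus mul0mx. Qed.

Lemma gain_m Gm : adj (L_m_minus R N n Gm) *m m = (sq R (Gm wminus))^* *: phi0N R N n.
Proof. by rewrite /L_m_minus adjZ adj_outer -scalemxAl outer_mul /ket_minus ip_mm scale1r. Qed.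


Lemma qf_scale rho (v : cv) c : qf rho (c *: v) = c^* * c * qf rho v.
Proof. by rewrite /qf adjZ -!scalemxAl -scalemxAr !mxE mulrA. Qed.

Lemma qf_scale0 rho (v : cv) c : c != 0 -> qf rho (c *: v) = 0 -> qf rho v = 0.
Proof.
move=> c0; rewrite qf_scale => /eqP; rewrite !mulf_eq0 conjC_eq0 (negbTE c0) /=.
by move/eqP.
Qed.

Lemma sq_neq0 x : 0 < x -> sq R x != 0.
Proof.
move=> x0; rewrite /sq /toC; apply/eqP => -[] /eqP.
by rewrite sqrtr_eq0 leNgt x0.
Qed.

Lemma eH_K H rho (x : cv) : rho *m x = 0 -> adj x *m rho = 0 ->
  qf (H *m rho) x = qf (rho *m H) x.
Proof.
move=> h1 h2.
have -> : qf (H *m rho) x = 0 by rewrite /qf -!mulmxA h1 !mulmx0 mxE.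
by rewrite /qf !mulmxA h2 !mul0mx mxE.
Qed.

Lemma supp_decomp rho : supported_on R N n _ rho (Omega_perp R N n) ->
  exists r1 r2 r3 r4 : 'rV[C]_d,
    rho = m *m r1 + p *m r2 + (phi01 R N n *m r3 + phi0N R N n *m r4).
Proof.
rewrite /supported_on => /submxP [D E].
have -> : rho = (rho^T)^T by rewrite trmxK.
rewrite E trmx_mul /Omega_perp !tr_col_mx !trmxK.
rewrite -[D^T]vsubmxK -[usubmx D^T]vsubmxK -[dsubmx D^T]vsubmxK !mul_row_col.
by eexists _, _, _, _.
Qed.

Lemma adj_decomp (y : cv) (r1 r2 r3 r4 : 'rV[C]_d) (f g : cv) :
  adj y *m (m *m r1 + p *m r2 + (f *m r3 + g *m r4)) =
  ip y m *: r1 + ip y p *: r2 + (ip y f *: r3 + ip y g *: r4).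
Proof. by rewrite !mulmxDr !mulmxA !adj_ip !mul_scalar_mx. Qed.

Lemma N1pos : (0 < N.-1)%N. Proof. by rewrite ltn_predRL. Qed.

Lemma e_Zop0 : adj (ketS 1 0) *m Zop R N n 0 = invsqrtn R n 0 *: \sum_(a < n 0) adj (ketS 0 a).
Proof.
have h1 : (0 < n 1)%N by apply: Hpos.
rewrite /Zop -scalemxAr mulmx_sumr; congr (_ *: _).
rewrite (bigD1 (Ordinal h1)) //= [X in _ + X]big1 => [|b nb].
  rewrite addr0 mulmx_sumr; apply: eq_bigr => a _.
  rewrite -scalemxAr mul_outer ip_ketS ?N1 ?N0 // !eqxx /=.
  by rewrite mul0n expr0 !scale1r.
rewrite mulmx_sumr big1 // => a _.
rewrite -scalemxAr mul_outer ip_ketS ?N1 ?N0 // eqxx /=.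
have -> : (0 == b :> nat) = false.
  by apply/negbTE; move: nb; apply: contra => /eqP e; apply/eqP/val_inj.
by rewrite scale0r scaler0.
Qed.

Lemma gain_e Gm : adj (L_m_k R N n Gm 0) *m ketS 1 0 =
  (sq R (Gm (wk 0)))^* *: ((invsqrtn R n 0)^* *: u 0).
Proof.
rewrite /L_m_k adjZ -scalemxAl; congr (_ *: _).
have -> : adj (Zop R N n 0) *m ketS 1 0 = adj (adj (ketS 1 0) *m Zop R N n 0).
  by rewrite adjM adjK.
by rewrite e_Zop0 adjZ adj_sum; congr (_ *: _); apply: eq_bigr => a _; rewrite adjK.
Qed.

Lemma gain_f Gm : adj (L_m_plus R N n Gm) *m phi01 R N n =
  (sq R (n1 R n * Gm wplus))^* *: (ip (phi01 R N n) (phi01 R N n) *: p).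
Proof. by rewrite /L_m_plus adjZ adj_outer -scalemxAl outer_mul. Qed.


Lemma ip_gm : ip (phi0N R N n) m = 0.
Proof. by apply: ip_phi_l => b hb; apply: ip_ketS_l _ Npred hb. Qed.
Lemma ip_gp : ip (phi0N R N n) p = 0.
Proof. by apply: ip_phi_l => b hb; apply: ip_ketS_l _ Npred hb. Qed.
Lemma ip_fm : ip (phi01 R N n) m = 0.
Proof. by apply: ip_phi_l => b hb; apply: ip_ketS_l _ N0 hb. Qed.
Lemma ip_fp : ip (phi01 R N n) p = 0.
Proof. by apply: ip_phi_l => b hb; apply: ip_ketS_l _ N0 hb. Qed.
Lemma ip_gf : ip (phi0N R N n) (phi01 R N n) = 0.
Proof.
apply: ip_phi_l => b hb; apply: ip_phi_r => c hc.
rewrite ip_ketS ?Npred ?N0 //.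
by have -> : (N.-1 == 0)%N = false by apply/negbTE; rewrite -lt0n N1pos.
Qed.
Lemma ip_fg : ip (phi01 R N n) (phi0N R N n) = 0.
Proof.
apply: ip_phi_l => b hb; apply: ip_phi_r => c hc.
rewrite ip_ketS ?Npred ?N0 //.
by have -> : (0 == N.-1)%N = false by apply/negbTE; rewrite eq_sym -lt0n N1pos.
Qed.
Lemma ip_em : ip (ketS 1 0) m = 0.
Proof. by apply: ip_ketS_l; rewrite ?N1 ?Hpos ?N1. Qed.
Lemma ip_ep : ip (ketS 1 0) p = 0.
Proof. by apply: ip_ketS_l; rewrite ?N1 ?Hpos ?N1. Qed.
Lemma ip_ef : ip (ketS 1 0) (phi01 R N n) = 0.
Proof. by apply: ip_phi_r => c hc; rewrite ip_ketS ?N1 ?N0 ?Hpos. Qed.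


Lemma main_thm Gm Gp gm gp (HGm : forall w, 0 < Gm w) (rho : 'M[C]_d) :
  is_state R N n rho -> generator Gm Gp gm gp rho = 0 ->
  supported_on R N n _ rho (Omega_perp R N n) -> rho = Pminus R N n.
Proof.
move=> [Hp Htr] Hg Hs.
have [r1 [r2 [r3 [r4 Er]]]] := supp_decomp _ Hs.
have [_ _ hm] := @gen_zero R N n Gm Gp gm gp rho m Hp Hg (eH_m gm gp rho)
  (condL_0 R N n rho _ _ (Lmp_m Gm)) (condL_0 R N n rho _ _ (Lpp_m Gp))
  (fun k hk => conj (condL_0 R N n rho _ _ (Lmk_m Gm k hk)) (condL_0 R N n rho _ _ (Lpk_m Gp k hk)))
  (condL_0 R N n rho _ _ (Lmm_m Gm)) (condL_0 R N n rho _ _ Lpm_m).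
rewrite gain_m in hm.
have c0 : (sq R (Gm wminus))^* != 0 by rewrite conjC_eq0 sq_neq0.
have hg := qf_scale0 _ _ _ c0 hm.
have [Kg1 Kg2] := ker_psd R N n rho _ Hp hg.
rewrite Er adj_decomp ip_gm ip_gp ip_gf !scale0r !add0r in Kg2.
have r40 : r4 = 0.
  by move/eqP: Kg2; rewrite scalemx_eq0 (negbTE (ip_phi_phi _ Npred)) /= => /eqP.
subst r4.
have Ke2 : adj (ketS 1 0) *m rho = 0.
  by rewrite Er adj_decomp ip_em ip_ep ip_ef !scale0r !add0r scaler0.
have qe : qf rho (ketS 1 0) = 0 by rewrite /qf Ke2 mul0mx mxE.
have [Ke1 _] := ker_psd R N n rho _ Hp qe.
have [_ he _] := @gen_zero R N n Gm Gp gm gp rho (ketS 1 0) Hp Hg (eH_K _ _ _ Ke1 Ke2)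
  (condL_K R N n rho _ _ Ke1 Ke2) (condL_K R N n rho _ _ Ke1 Ke2)
  (fun k hk => conj (condL_K R N n rho _ _ Ke1 Ke2) (condL_K R N n rho _ _ Ke1 Ke2))
  (condL_K R N n rho _ _ Ke1 Ke2) (condL_K R N n rho _ _ Ke1 Ke2).
have := he (Ordinal N1pos); rewrite /= gain_e => he0.
have c1 : (sq R (Gm (wk 0)))^* != 0 by rewrite conjC_eq0 sq_neq0.
have c2 : (invsqrtn R n 0)^* != 0 by rewrite conjC_eq0 s_neq0 ?N0.
have hu := qf_scale0 _ _ _ c2 (qf_scale0 _ _ _ c1 he0).
have hf : qf rho (phi01 R N n) = 0 by rewrite /phi01 phi_0 qf_scale hu mulr0.
have [Kf1 Kf2] := ker_psd R N n rho _ Hp hf.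
have Kf2' := Kf2.
rewrite Er adj_decomp ip_fm ip_fp ip_fg !scale0r !add0r ?scaler0 ?addr0 in Kf2'.
have r30 : r3 = 0.
  by move/eqP: Kf2'; rewrite scalemx_eq0 (negbTE (ip_phi_phi _ N0)) /= => /eqP.
subst r3.
have [hp _ _] := @gen_zero R N n Gm Gp gm gp rho (phi01 R N n) Hp Hg (eH_K _ _ _ Kf1 Kf2)
  (condL_K R N n rho _ _ Kf1 Kf2) (condL_K R N n rho _ _ Kf1 Kf2)
  (fun k hk => conj (condL_K R N n rho _ _ Kf1 Kf2) (condL_K R N n rho _ _ Kf1 Kf2))
  (condL_K R N n rho _ _ Kf1 Kf2) (condL_K R N n rho _ _ Kf1 Kf2).
rewrite gain_f in hp.
have c3 : (sq R (n1 R n * Gm wplus))^* != 0.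
  by rewrite conjC_eq0 sq_neq0 // mulr_gt0 // ltr0n Hpos ?N0.
have hpp := qf_scale0 _ _ _ (ip_phi_phi _ N0) (qf_scale0 _ _ _ c3 hp).
have [_ Kp2] := ker_psd R N n rho _ Hp hpp.
rewrite Er adj_decomp ip_pm ip_pp scale0r scale1r !(scaler0, addr0, add0r) in Kp2.
subst r2.
have Er' : rho = m *m r1 by rewrite Er !mulmx0 !addr0.
pose jm := enum_rank (inl false : Defs.idx N n).
have Em : m = delta_mx jm 0 by rewrite ket_delta.
have hr1 : forall j, j != jm -> r1 0 j = 0.
  move=> j nj.
  have ey : (delta_mx j 0 : cv) = ket R N n (enum_val j) by rewrite ket_delta enum_valK.
  have Ky : adj (delta_mx j 0 : cv) *m rho = 0.
    rewrite Er' mulmxA adj_ip ey ip_ket.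
    have -> : (enum_val j == inl false) = false.
      by apply/negbTE; apply: contra nj => /eqP e; rewrite /jm -e enum_valK.
    by rewrite mul_scalar_mx scale0r.
  have qy : qf rho (delta_mx j 0) = 0 by rewrite /qf Ky mul0mx mxE.
  have [Ky1 _] := ker_psd R N n rho _ Hp qy.
  have E1 : (rho *m (delta_mx j 0 : cv)) jm 0 = r1 0 j.
    by rewrite Er' Em -mulmxA mxE big_ord1 mxE !eqxx mul1r mul_delta_col.
  by rewrite -E1 Ky1 mxE.
have t1 : r1 0 jm = 1.
  move: Htr; rewrite Er' Em /mxtrace (bigD1 jm) //= big1 => [|i ni].
    by rewrite mxE big_ord1 mxE !eqxx mul1r addr0.
  by rewrite mxE big_ord1 mxE (negbTE ni) mul0r.
rewrite Er' /Pminus /outer /ket_minus Em adj_delta; congr (_ *m _).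
apply/matrixP => i j; rewrite (ord1 i) !mxE eqxx /=.
by case: (eqVneq j jm) => [->|nj]; rewrite ?eqxx ?t1 // hr1 // (negbTE nj).
Qed.
End Conc.

Theorem theorem3p25 (R : realType) (N : nat) (n : nat -> nat)
  (HN : (2 <= N)%N)
  (Hmono : forall k l : nat, (k <= l)%N -> (l < N)%N -> (n l <= n k)%N)
  (Hpos : forall k : nat, (k < N)%N -> (1 <= n k)%N)
  (Gm Gp gm gp : freq -> R)
  (HGm : forall w, 0 < Gm w) (HGp : forall w, 0 < Gp w)
  (rho : 'M[R[i]]_(hdim N n)) :
  is_state R N n rho ->
  generator Gm Gp gm gp rho = 0 ->
  supported_on R N n _ rho (Omega_perp R N n) ->
  rho = Pminus R N n.
Proof.
move=> Hs Hg Hsupp.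
exact: (@main_thm R N n HN Hpos Gm Gp gm gp HGm rho Hs Hg Hsupp).
Qed.
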